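(* Let $(X,\delta_X)$ be a represented space. The following are equivalent: (1) $X$ admits a total precomplete representation $\delta:\mathbb{N}^\mathbb{N}\to X$ with $\delta\equiv\delta_X$; (2) every computable (single-valued, partial) $f:\subseteq\mathbb{N}^\mathbb{N}\to X$ has a total computable extension $g:\mathbb{N}^\mathbb{N}\to X$; (3) for every represented space $Y$ and every computable problem $f:\subseteq Y\rightrightarrows X$ there is a total computable problem $g:Y\rightrightarrows X$ with $g(y)\subseteq f(y)$ for all $y\in\mathrm{dom}(f)$; (4) $X$ is multi-retraceable, i.e. there is a computable multi-valued retraction $r:\overline{X}\rightrightarrows X$.
   Context: A represented space $(X,\delta_X)$ is a set $X$ with a surjective partial map $\delta_X:\subseteq\mathbb{N}^\mathbb{N}\to X$. A problem $f:\subseteq X\rightrightarrows Y$ between represented spaces is a partial multi-valued map; $F:\subseteq\mathbb{N}^\mathbb{N}\to\mathbb{N}^\mathbb{N}$ realizes $f$ if $\delta_Y F(p)\in f(\delta_X(p))$ whenever $\delta_X(p)\in\mathrm{dom}(f)$; $f$ is computable if it has a computable realizer; $f$ is total if $\mathrm{dom}(f)=X$. For representations $\delta_1,\delta_2$ of the same set, $\delta_1\le\delta_2$ means $\delta_1=\delta_2F$ for some computable partial $F$, and $\equiv$ is the induced equivalence. A representation $\delta$ is precomplete if for every computable partial $F:\subseteq\mathbb{N}^\mathbb{N}\to\mathbb{N}^\mathbb{N}$ there is a total computable $G$ with $\delta F(p)=\delta G(p)$ for all $p\in\mathrm{dom}(F)$. For $p\in\mathbb{N}^\mathbb{N}$,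 $p-1$ denotes the finite or infinite sequence obtained by concatenating $p(0)-1,p(1)-1,\dots$, where $0-1$ is read as the empty word. The completion of $(X,\delta_X)$ is $\overline{X}=X\cup\{\bot\}$ ($\bot\notin X$) with the total representation $\delta_{\overline X}(p)=\delta_X(p-1)$ if $p-1$ is an infinite sequence in $\mathrm{dom}(\delta_X)$, and $\delta_{\overline X}(p)=\bot$ otherwise. For $Y\subseteq Z$, a (multi-valued) map $r:Z\rightrightarrows Y$ is a retraction if $r(y)=\{y\}$ for all $y\in Y$. *)

(* Defs.v *)
From Stdlib Require Import Arith List Classical ClassicalEpsilon.
Import ListNotations.

Set Implicit Arguments.

Definition baire := nat -> nat.

Inductive rfun : Type :=
| RZero : rfun
| RSucc : rfun
| RProj : nat -> rfun
| RComp : rfun -> list rfun -> rfun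
| RPrec : rfun -> rfun -> rfun
| RMu : rfun -> rfun.

Inductive reval : rfun -> list nat -> nat -> Prop :=
| e_zero v : reval RZero v 0
| e_succ v : reval RSucc v (S (hd 0 v))
| e_proj i v : reval (RProj i) v (nth i v 0)
| e_comp f gs v ws y : revals gs v ws -> reval f ws y -> reval (RComp f gs) v y
| e_prec0 f g v y : reval f v y -> reval (RPrec f g) (0 :: v) y
| e_precS f g n v r y :
    reval (RPrec f g) (n :: v) r -> reval g (n :: r :: v) y ->
    reval (RPrec f g) (S n :: v) y
| e_mu f v n : reval f (n :: v) 0 ->
    (forall m, m < n -> exists k, reval f (m :: v) (S k)) -> reval (RMu f) v n
with revals : list rfun -> list nat -> list nat -> Prop :=
| es_nil v : revals nil v nil
| es_cons g gs v y ys : reval g v y -> revals gs v ys -> revals (g :: gs) v (y :: ys).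

Definition computable_nat (a : nat -> nat) : Prop :=
  exists c : rfun, forall n, reval c [n] (a n).

Definition cpair (n m : nat) : nat := (n + m) * (n + m + 1) / 2 + m.

Fixpoint code_list (l : list nat) : nat :=
  match l with
  | [] => 0
  | x :: l' => S (cpair x (code_list l'))
  end.

Definition prefix (p : baire) (k : nat) : list nat := map p (seq 0 k).

(** [phi a p q]: the associate [a] applied to [p] yields [q]: for each n the
    output q n is read off at the first prefix on which a answers S (q n). *)
Definition phi (a : nat -> nat) (p q : baire) : Prop :=
  forall n, exists k,
    a (cpair n (code_list (prefix p k))) = S (q n) /\
    forall j, j < k -> a (cpair n (code_list (prefix p j))) = 0.

Definition comp_baire (F : baire -> option baire) : Prop :=
  exists a, computable_nat a /\ forall p q, F p = Some q -> phi a p q.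

Record rep_space : Type := RepSpace {
  carrier :> Type;
  delta : baire -> option carrier;
  delta_surj : forall x : carrier, exists p, delta p = Some x
}.

Definition id_rep : baire -> option baire := fun p => Some p.

Definition mv_dom {A B : Type} (f : A -> B -> Prop) (a : A) : Prop := exists b, f a b.

Definition mv_total {A B : Type} (f : A -> B -> Prop) : Prop := forall a, mv_dom f a.

Definition realizes {A B : Type} (dA : baire -> option A) (dB : baire -> option B)
  (F : baire -> option baire) (f : A -> B -> Prop) : Prop :=
  forall p a, dA p = Some a -> mv_dom f a ->
    exists q b, F p = Some q /\ dB q = Some b /\ f a b.

Definition computable_mv {A B : Type} (dA : baire -> option A) (dB : baire -> option B)
  (f : A -> B -> Prop) : Prop :=
  exists F, comp_baire F /\ realizes dA dB F f.

Definition graph_p {A B : Type} (f : A -> option B) : A -> B -> Prop :=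
  fun a b => f a = Some b.
Definition graph_t {A B : Type} (f : A -> B) : A -> B -> Prop :=
  fun a b => b = f a.

Definition rep_le {X : Type} (d1 d2 : baire -> option X) : Prop :=
  exists F, comp_baire F /\
    forall p, d1 p = match F p with Some q => d2 q | None => None end.

Definition rep_equiv {X : Type} (d1 d2 : baire -> option X) : Prop :=
  rep_le d1 d2 /\ rep_le d2 d1.

Definition precomplete {X : Type} (d : baire -> X) : Prop :=
  forall F, comp_baire F ->
    exists G : baire -> baire, comp_baire (fun p => Some (G p)) /\
      forall p q, F p = Some q -> d q = d (G p).

Fixpoint cnz (p : baire) (n : nat) : nat :=
  match n with
  | 0 => 0
  | S m => cnz p m + (if Nat.eqb (p m) 0 then 0 else 1)
  end.

(** [minus1 p q]: p-1 is the infinite sequence q (its k-th entry comes from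
    the k-th nonzero entry of p, decremented). *)
Definition minus1 (p q : baire) : Prop :=
  forall k, exists n, p n = S (q k) /\ cnz p n = k.

(** the representation of the completion  X̄ = option X  (None = ⊥) *)
Definition compl_delta (X : rep_space) (p : baire) : option (option X) :=
  match excluded_middle_informative
          (exists x : X, exists q, minus1 p q /\ delta X q = Some x) with
  | left H => Some (Some (proj1_sig (constructive_indefinite_description _ H)))
  | right _ => Some None
  end.

Definition mv_retraction {X : Type} (r : option X -> X -> Prop) : Prop :=
  mv_total r /\ forall x y, r (Some x) y <-> y = x.

(* Main.v *)
Require Import Defs.
From Stdlib Require Import Arith List Lia Classical ClassicalEpsilon FunctionalExtensionality.
Import ListNotations.

Definition R1 (f : nat -> nat) := exists c, forall x, reval c [x] (f x).
Definition R2 (f : nat -> nat -> nat) := exists c, forall x y, reval c [x;y] (f x y).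
Definition R3 (f : nat -> nat -> nat -> nat) := exists c, forall x y z, reval c [x;y;z] (f x y z).

Lemma R1_ext f g : R1 f -> (forall x, f x = g x) -> R1 g.
Proof. intros [c H] E; exists c; intro x; rewrite <- E; auto. Qed.
Lemma R2_ext f g : R2 f -> (forall x y, f x y = g x y) -> R2 g.
Proof. intros [c H] E; exists c; intros x y; rewrite <- E; auto. Qed.
Lemma R3_ext f g : R3 f -> (forall x y z, f x y z = g x y z) -> R3 g.
Proof. intros [c H] E; exists c; intros x y z; rewrite <- E; auto. Qed.

Lemma R1_S : R1 S. Proof. exists RSucc; intro x; exact (e_succ [x]). Qed.
Lemma R1_id : R1 (fun x => x). Proof. exists (RProj 0); intro x; exact (e_proj 0 [x]). Qed.
Lemma R1_zero : R1 (fun _ => 0). Proof. exists RZero; intro x; exact (e_zero [x]). Qed.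
Lemma R2_p1 : R2 (fun x y => x). Proof. exists (RProj 0); intros x y; exact (e_proj 0 [x;y]). Qed.
Lemma R2_p2 : R2 (fun x y => y). Proof. exists (RProj 1); intros x y; exact (e_proj 1 [x;y]). Qed.
Lemma R3_p1 : R3 (fun x y z => x). Proof. exists (RProj 0); intros x y z; exact (e_proj 0 [x;y;z]). Qed.
Lemma R3_p2 : R3 (fun x y z => y). Proof. exists (RProj 1); intros x y z; exact (e_proj 1 [x;y;z]). Qed.
Lemma R3_p3 : R3 (fun x y z => z). Proof. exists (RProj 2); intros x y z; exact (e_proj 2 [x;y;z]). Qed.

Lemma R1_11 f g : R1 f -> R1 g -> R1 (fun x => f (g x)).
Proof. intros [cf Hf] [cg Hg]; exists (RComp cf [cg]); intro x.
  eapply e_comp; [ repeat econstructor; eauto | apply Hf ]. Qed.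
Lemma R1_21 f g h : R2 f -> R1 g -> R1 h -> R1 (fun x => f (g x) (h x)).
Proof. intros [cf Hf] [cg Hg] [ch Hh]; exists (RComp cf [cg; ch]); intro x.
  eapply e_comp; [ repeat econstructor; eauto | apply Hf ]. Qed.
Lemma R1_31 f g h k : R3 f -> R1 g -> R1 h -> R1 k -> R1 (fun x => f (g x) (h x) (k x)).
Proof. intros [cf Hf] [cg Hg] [ch Hh] [ck Hk]; exists (RComp cf [cg; ch; ck]); intro x.
  eapply e_comp; [ repeat econstructor; eauto | apply Hf ]. Qed.
Lemma R2_12 f g : R1 f -> R2 g -> R2 (fun x y => f (g x y)).
Proof. intros [cf Hf] [cg Hg]; exists (RComp cf [cg]); intros x y.
  eapply e_comp; [ repeat econstructor; eauto | apply Hf ]. Qed.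
Lemma R2_22 f g h : R2 f -> R2 g -> R2 h -> R2 (fun x y => f (g x y) (h x y)).
Proof. intros [cf Hf] [cg Hg] [ch Hh]; exists (RComp cf [cg; ch]); intros x y.
  eapply e_comp; [ repeat econstructor; eauto | apply Hf ]. Qed.
Lemma R3_13 f g : R1 f -> R3 g -> R3 (fun x y z => f (g x y z)).
Proof. intros [cf Hf] [cg Hg]; exists (RComp cf [cg]); intros x y z.
  eapply e_comp; [ repeat econstructor; eauto | apply Hf ]. Qed.
Lemma R3_23 f g h : R2 f -> R3 g -> R3 h -> R3 (fun x y z => f (g x y z) (h x y z)).
Proof. intros [cf Hf] [cg Hg] [ch Hh]; exists (RComp cf [cg; ch]); intros x y z.
  eapply e_comp; [ repeat econstructor; eauto | apply Hf ]. Qed.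

Fixpoint rec2 (b : nat -> nat) (s : nat -> nat -> nat -> nat) (n x : nat) : nat :=
  match n with 0 => b x | S i => s i (rec2 b s i x) x end.

Lemma R2_rec b s : R1 b -> R3 s -> R2 (rec2 b s).
Proof. intros [cb Hb] [cs Hs]; exists (RPrec cb cs); intros n x.
  induction n; simpl.
  - apply e_prec0; apply Hb.
  - eapply e_precS; [ exact IHn | apply Hs ]. Qed.

Lemma R2_add : R2 (fun x y => x + y).
Proof. eapply R2_ext. apply (R2_rec (fun x => x) (fun _ r _ => S r)).
  apply R1_id. apply R3_13. apply R1_S. apply R3_p2.
  intros n x; induction n; simpl; auto. Qed.
Lemma R2_mul : R2 (fun x y => x * y).
Proof. eapply R2_ext. apply (R2_rec (fun _ => 0) (fun _ r x => r + x)).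
  apply R1_zero. apply R3_23. apply R2_add. apply R3_p2. apply R3_p3.
  intros n x; induction n; simpl; auto. rewrite IHn; lia. Qed.
Lemma R1_pred : R1 pred.
Proof. eapply R1_ext. apply (R1_21 (rec2 (fun _ => 0) (fun i _ _ => i)) (fun x => x) (fun _ => 0)).
  apply R2_rec. apply R1_zero. apply R3_p1. apply R1_id. apply R1_zero.
  intros [|x]; reflexivity. Qed.
Lemma R2_sub : R2 (fun x y => x - y).
Proof. eapply R2_ext. apply (R2_22 (rec2 (fun x => x) (fun _ r _ => pred r)) (fun x y => y) (fun x y => x)).
  apply R2_rec. apply R1_id. apply R3_13. apply R1_pred. apply R3_p2. apply R2_p2. apply R2_p1.
  intros x y; simpl. revert x; induction y; intros x; simpl. lia. rewrite IHy; lia. Qed.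
Lemma R1_const k : R1 (fun _ => k).
Proof. induction k. apply R1_zero. apply (R1_11 S (fun _ => k)); auto using R1_S. Qed.
Lemma R3_33 f g h k : R3 f -> R3 g -> R3 h -> R3 k -> R3 (fun x y z => f (g x y z) (h x y z) (k x y z)).
Proof. intros [cf Hf] [cg Hg] [ch Hh] [ck Hk]; exists (RComp cf [cg; ch; ck]); intros x y z.
  eapply e_comp; [ repeat econstructor; eauto | apply Hf ]. Qed.
Lemma R3_const k : R3 (fun _ _ _ => k).
Proof. apply (R3_13 (fun _ => k) (fun x y z => x)). apply R1_const. apply R3_p1. Qed.
Lemma R2_const k : R2 (fun _ _ => k).
Proof. apply (R2_12 (fun _ => k) (fun x y => x)). apply R1_const. apply R2_p1. Qed.

Definition ite (c a b : nat) := if c =? 0 then b else a.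
Definition leb_n (x y : nat) := if x <=? y then 1 else 0.
Lemma ite_0 a b : ite 0 a b = b. Proof. reflexivity. Qed.
Lemma ite_S c a b : ite (S c) a b = a. Proof. reflexivity. Qed.

Lemma R3_ite : R3 ite.
Proof. eapply R3_ext.
  apply (R3_23 (fun x y => x + y) (fun c a b => a * (1 - (1 - c))) (fun c a b => b * (1 - c))).
  apply R2_add.
  apply (R3_23 (fun x y => x * y)). apply R2_mul. apply R3_p2.
  apply (R3_23 (fun x y => x - y)). apply R2_sub. apply R3_const.
  apply (R3_23 (fun x y => x - y)). apply R2_sub. apply R3_const. apply R3_p1.
  apply (R3_23 (fun x y => x * y)). apply R2_mul. apply R3_p3.
  apply (R3_23 (fun x y => x - y)). apply R2_sub. apply R3_const. apply R3_p1.
  intros c a b; unfold ite. destruct (Nat.eqb_spec c 0). subst; simpl; lia.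
  replace (1 - c) with 0 by lia. simpl. lia. Qed.

Lemma R2_leb : R2 leb_n.
Proof. eapply R2_ext. apply (R2_22 (fun x y => x - y) (fun _ _ => 1) (fun x y => x - y)).
  apply R2_sub. apply R2_const. apply R2_sub.
  intros x y; unfold leb_n. destruct (Nat.leb_spec x y); lia. Qed.

Fixpoint T (s : nat) : nat := match s with 0 => 0 | S s' => T s' + S s' end.

Lemma R1_T : R1 T.
Proof. eapply R1_ext. apply (R1_21 (rec2 (fun _ => 0) (fun i r _ => r + S i)) (fun x => x) (fun _ => 0)).
  apply R2_rec. apply R1_zero. apply R3_23. apply R2_add. apply R3_p2. apply R3_13. apply R1_S. apply R3_p1.
  apply R1_id. apply R1_zero.
  intro x; induction x; simpl; auto. Qed.

Lemma T_double s : 2 * T s = s * (s + 1).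
Proof. induction s; simpl T; [lia|nia]. Qed.

Lemma cpair_T n m : cpair n m = T (n + m) + m.
Proof. unfold cpair. f_equal. rewrite <- T_double.
  rewrite Nat.mul_comm. apply Nat.div_mul. lia. Qed.

Lemma R2_cpair : R2 cpair.
Proof. eapply R2_ext. apply (R2_22 (fun x y => x + y) (fun n m => T (n + m)) (fun n m => m)).
  apply R2_add. apply R2_12. apply R1_T. apply R2_add. apply R2_p2.
  intros; rewrite cpair_T; auto. Qed.

Fixpoint diag (z : nat) : nat :=
  match z with 0 => 0 | S z' => ite (leb_n (T (S (diag z'))) (S z')) (S (diag z')) (diag z') end.

Lemma R1_diag : R1 diag.
Proof. eapply R1_ext.
  apply (R1_21 (rec2 (fun _ => 0) (fun i r _ => ite (leb_n (T (S r)) (S i)) (S r) r)) (fun x => x) (fun _ => 0)).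
  apply R2_rec. apply R1_zero.
  apply R3_33. apply R3_ite.
  apply R3_23. apply R2_leb. apply R3_13. apply R1_T. apply R3_13. apply R1_S. apply R3_p2.
  apply R3_13. apply R1_S. apply R3_p1.
  apply R3_13. apply R1_S. apply R3_p2. apply R3_p2.
  apply R1_id. apply R1_zero.
  intro x; induction x; [reflexivity|]. cbn [rec2 diag]. rewrite IHx. reflexivity. Qed.

Lemma T_mono a b : a <= b -> T a <= T b.
Proof. induction 1; simpl; lia. Qed.

Lemma diag_spec z : T (diag z) <= z < T (S (diag z)).
Proof. induction z; simpl. lia. unfold ite, leb_n.
  destruct (Nat.leb_spec (T (diag z) + S (diag z)) (S z)); simpl.
  - simpl in IHz. split. simpl; lia. simpl. lia.
  - simpl in *. lia. Qed.

Lemma diag_unique z s : T s <= z < T (S s) -> diag z = s.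
Proof. intros Hs. pose proof (diag_spec z) as Hd.
  destruct (lt_eq_lt_dec (diag z) s) as [[Hl|He]|Hl]; auto.
  - pose proof (T_mono (S (diag z)) s Hl). lia.
  - pose proof (T_mono (S s) (diag z) Hl). lia. Qed.

Definition unp2 z := z - T (diag z).
Definition unp1 z := diag z - unp2 z.

Lemma diag_cpair n m : diag (cpair n m) = n + m.
Proof. apply diag_unique. rewrite cpair_T. simpl. lia. Qed.
Lemma unp1_pair n m : unp1 (cpair n m) = n.
Proof. unfold unp1, unp2. rewrite diag_cpair. rewrite cpair_T. lia. Qed.
Lemma unp2_pair n m : unp2 (cpair n m) = m.
Proof. unfold unp2. rewrite diag_cpair. rewrite cpair_T. lia. Qed.

Lemma R1_unp2 : R1 unp2.
Proof. apply (R1_21 (fun x y => x - y)). apply R2_sub. apply R1_id. apply R1_11. apply R1_T. apply R1_diag. Qed.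
Lemma R1_unp1 : R1 unp1.
Proof. apply (R1_21 (fun x y => x - y)). apply R2_sub. apply R1_diag. apply R1_unp2. Qed.
Lemma c_S f : R1 f -> R1 (fun x => S (f x)).
Proof. intro; apply (R1_11 S); auto using R1_S. Qed.
Lemma c_pred f : R1 f -> R1 (fun x => pred (f x)).
Proof. intro; apply (R1_11 pred); auto using R1_pred. Qed.
Lemma c_add f g : R1 f -> R1 g -> R1 (fun x => f x + g x).
Proof. intros; apply (R1_21 (fun x y => x + y)); auto using R2_add. Qed.
Lemma c_mul f g : R1 f -> R1 g -> R1 (fun x => f x * g x).
Proof. intros; apply (R1_21 (fun x y => x * y)); auto using R2_mul. Qed.
Lemma c_sub f g : R1 f -> R1 g -> R1 (fun x => f x - g x).
Proof. intros; apply (R1_21 (fun x y => x - y)); auto using R2_sub. Qed.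
Lemma c_leb f g : R1 f -> R1 g -> R1 (fun x => leb_n (f x) (g x)).
Proof. intros; apply (R1_21 leb_n); auto using R2_leb. Qed.
Lemma c_pair f g : R1 f -> R1 g -> R1 (fun x => cpair (f x) (g x)).
Proof. intros; apply (R1_21 cpair); auto using R2_cpair. Qed.
Lemma c_ite f g h : R1 f -> R1 g -> R1 h -> R1 (fun x => ite (f x) (g x) (h x)).
Proof. intros; apply (R1_31 ite); auto using R3_ite. Qed.
Lemma c_unp1 f : R1 f -> R1 (fun x => unp1 (f x)).
Proof. intro; apply (R1_11 unp1); auto using R1_unp1. Qed.
Lemma c_unp2 f : R1 f -> R1 (fun x => unp2 (f x)).
Proof. intro; apply (R1_11 unp2); auto using R1_unp2. Qed.
Lemma c_app (a : nat -> nat) f : R1 a -> R1 f -> R1 (fun x => a (f x)).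
Proof. intros; apply R1_11; auto. Qed.

Definition P2 (G : nat -> nat -> nat) := R1 (fun y => G (unp1 y) (unp2 y)).
Lemma c_P2 G f g : P2 G -> R1 f -> R1 g -> R1 (fun x => G (f x) (g x)).
Proof. intros HG Hf Hg. eapply R1_ext. apply (R1_11 _ (fun x => cpair (f x) (g x)) HG).
  apply c_pair; auto. intro x; simpl. rewrite unp1_pair, unp2_pair; auto. Qed.

Fixpoint prec1 (b s : nat -> nat) (n w : nat) : nat :=
  match n with 0 => b w | S i => s (cpair i (cpair (prec1 b s i w) w)) end.

Lemma c_rec b s h g : R1 b -> R1 s -> R1 h -> R1 g -> R1 (fun x => prec1 b s (h x) (g x)).
Proof. intros Hb Hs Hh Hg. eapply R1_ext.
  apply (R1_21 (rec2 b (fun i r w => s (cpair i (cpair r w)))) h g); auto.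
  apply R2_rec; auto. apply R3_13; auto. apply R3_23. apply R2_cpair. apply R3_p1.
  apply R3_23. apply R2_cpair. apply R3_p2. apply R3_p3.
  intro x; cbv beta; generalize (h x) (g x); intros n w; induction n; simpl; try rewrite IHn; auto. Qed.

Ltac crec := repeat first
  [ assumption | apply R1_id | apply R1_const | apply c_unp1 | apply c_unp2 | apply c_pair | apply c_ite
  | apply c_leb | apply c_S | apply c_pred | apply c_add | apply c_mul | apply c_sub ].

Lemma c_iter f h g : R1 f -> R1 h -> R1 g -> R1 (fun x => Nat.iter (h x) f (g x)).
Proof. intros Hf Hh Hg. eapply R1_ext.
  apply (c_rec (fun w => w) (fun y => f (unp1 (unp2 y))) h g); auto. apply R1_id.
  apply c_app; auto; crec.
  intro x; cbv beta; generalize (h x) (g x); intros n w; induction n; simpl; auto.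
  rewrite unp2_pair, unp1_pair, IHn; auto. Qed.

Fixpoint bmin (P : nat -> nat) (n : nat) : nat :=
  match n with 0 => 0 | S k => ite (leb_n (S (bmin P k)) k) (bmin P k) (ite (P k) k (S k)) end.

Lemma c_bmin P h g : P2 P -> R1 h -> R1 g -> R1 (fun x => bmin (P (g x)) (h x)).
Proof. intros HP Hh Hg. eapply R1_ext.
  apply (c_rec (fun _ => 0) (fun y => ite (leb_n (S (unp1 (unp2 y))) (unp1 y)) (unp1 (unp2 y))
      (ite (P (unp2 (unp2 y)) (unp1 y)) (unp1 y) (S (unp1 y)))) h g); auto.
  apply R1_zero. crec. apply c_P2; crec.
  intro x; cbv beta; generalize (h x) (g x); intros n w; induction n; simpl; auto.
  rewrite !unp2_pair, !unp1_pair, IHn; auto. Qed.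

Lemma bmin_spec P n : bmin P n <= n /\ (forall i, i < bmin P n -> P i = 0) /\
   (bmin P n < n -> P (bmin P n) <> 0).
Proof. induction n. simpl. split; [lia|split; intros; lia].
  destruct IHn as [H1 [H2 H3]]. cbn [bmin]. unfold leb_n.
  destruct (Nat.leb_spec (S (bmin P n)) n); rewrite ?ite_0, ?ite_S.
  - split; [lia|split; auto].

  - assert (bmin P n = n) by lia. unfold ite.
    destruct (Nat.eqb_spec (P n) 0).
    + split; [lia|split]. intros i Hi. destruct (Nat.eq_dec i n); subst; auto. apply H2; lia. lia.
    + split; [lia|split]. intros i Hi; apply H2; lia. intros; auto. Qed.

Lemma bmin_eq P n i : i < n -> P i <> 0 -> (forall j, j < i -> P j = 0) -> bmin P n = i.
Proof. intros Hi Pi Hj. destruct (bmin_spec P n) as [H1 [H2 H3]].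
  destruct (lt_eq_lt_dec (bmin P n) i) as [[Hl|He]|Hl]; auto.
  - exfalso. apply H3. lia. apply Hj; auto.
  - exfalso. apply Pi. apply H2; auto. Qed.

Lemma bmin_none P n : (forall j, j < n -> P j = 0) -> bmin P n = n.
Proof. intros Hj. destruct (bmin_spec P n) as [H1 [H2 H3]].
  destruct (Nat.eq_dec (bmin P n) n); auto. exfalso. apply H3. lia. apply Hj; lia. Qed.

Lemma bmin_ext P Q n : (forall i, i < n -> P i = Q i) -> bmin P n = bmin Q n.
Proof. induction n; intros H; simpl; auto. rewrite IHn by (intros; apply H; lia).
  rewrite H by lia. auto. Qed.

Fixpoint bcount (P : nat -> nat) (n : nat) : nat :=
  match n with 0 => 0 | S k => bcount P k + ite (P k) 1 0 end.

Lemma c_bcount P h g : P2 P -> R1 h -> R1 g -> R1 (fun x => bcount (P (g x)) (h x)).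
Proof. intros HP Hh Hg. eapply R1_ext.
  apply (c_rec (fun _ => 0) (fun y => unp1 (unp2 y) + ite (P (unp2 (unp2 y)) (unp1 y)) 1 0) h g); auto.
  apply R1_zero. crec. apply c_P2; crec.
  intro x; cbv beta; generalize (h x) (g x); intros n w; induction n; simpl; auto.
  rewrite !unp2_pair, !unp1_pair, IHn; auto. Qed.

Lemma bcount_ext P Q n : (forall i, i < n -> P i = Q i) -> bcount P n = bcount Q n.
Proof. induction n; intros H; simpl; auto. rewrite IHn by (intros; apply H; lia).
  rewrite H by lia. auto. Qed.

Fixpoint mkc_aux (F : nat -> nat) (L t : nat) : nat :=
  match t with 0 => 0 | S t' => S (cpair (F (L - S t')) (mkc_aux F L t')) end.
Definition mkc F L := mkc_aux F L L.

Lemma c_mkc G h g : P2 G -> R1 h -> R1 g -> R1 (fun x => mkc (G (g x)) (h x)).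
Proof. intros HG Hh Hg. eapply R1_ext.
  apply (c_rec (fun _ => 0) (fun y => S (cpair (G (unp2 (unp2 (unp2 y))) (unp1 (unp2 (unp2 y)) - S (unp1 y)))
     (unp1 (unp2 y)))) h (fun x => cpair (h x) (g x))); auto.
  apply R1_zero. crec. apply c_P2; crec. crec.
  intro x; cbv beta; unfold mkc. generalize (h x) (g x); intros L w. generalize L at 1 4; intro n.
  induction n; simpl; auto. rewrite !unp2_pair, !unp1_pair, IHn; auto. Qed.

Lemma mkc_aux_spec F L t : t <= L -> mkc_aux F L t = code_list (map F (seq (L - t) t)).
Proof. induction t; intros H; simpl; auto. rewrite IHt by lia.
  replace (L - t) with (S (L - S t)) by lia. reflexivity. Qed.

Lemma mkc_spec F L : mkc F L = code_list (map F (seq 0 L)).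
Proof. unfold mkc; rewrite mkc_aux_spec by lia. rewrite Nat.sub_diag; auto. Qed.
Definition lhd z := unp1 (pred z).
Definition ltl z := unp2 (pred z).
Definition itl i z := Nat.iter i ltl z.
Definition lnth i z := lhd (itl i z).
Definition llen z := bmin (fun i => 1 - itl i z) (S z).
Definition firstc j c := mkc (fun i => lnth i c) j.
Definition sg x := ite x 1 0.
Definition eqn x y := leb_n x y * leb_n y x.

Lemma c_ltl f : R1 f -> R1 (fun x => ltl (f x)).
Proof. intro; unfold ltl; crec. Qed.
Lemma c_itl f g : R1 f -> R1 g -> R1 (fun x => itl (f x) (g x)).
Proof. intros; unfold itl; apply c_iter; auto. apply c_ltl, R1_id. Qed.
Lemma c_lnth f g : R1 f -> R1 g -> R1 (fun x => lnth (f x) (g x)).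
Proof. intros; unfold lnth, lhd. crec. apply c_itl; auto. Qed.
Lemma c_llen f : R1 f -> R1 (fun x => llen (f x)).
Proof. intros; unfold llen. apply (c_bmin (fun z i => 1 - itl i z)); crec.
  unfold P2; crec. apply c_itl; crec. Qed.
Lemma c_firstc f g : R1 f -> R1 g -> R1 (fun x => firstc (f x) (g x)).
Proof. intros; unfold firstc. apply (c_mkc (fun c i => lnth i c)); auto.
  unfold P2; apply c_lnth; crec. Qed.
Lemma c_sg f : R1 f -> R1 (fun x => sg (f x)).
Proof. intros; unfold sg; crec. Qed.
Lemma c_eqn f g : R1 f -> R1 g -> R1 (fun x => eqn (f x) (g x)).
Proof. intros; unfold eqn; apply c_mul; crec. Qed.

Ltac crec_ext := fail.
Ltac crec_step := lazymatch goal with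
  | |- R1 (fun x => x) => apply R1_id
  | |- R1 (fun _ => ?k) => apply R1_const
  | |- R1 (fun x => firstc _ _) => apply c_firstc
  | |- R1 (fun x => llen _) => apply c_llen
  | |- R1 (fun x => lnth _ _) => apply c_lnth
  | |- R1 (fun x => itl _ _) => apply c_itl
  | |- R1 (fun x => sg _) => apply c_sg
  | |- R1 (fun x => eqn _ _) => apply c_eqn
  | |- R1 (fun x => unp1 _) => apply c_unp1
  | |- R1 (fun x => unp2 _) => apply c_unp2
  | |- R1 (fun x => cpair _ _) => apply c_pair
  | |- R1 (fun x => ite _ _ _) => apply c_ite
  | |- R1 (fun x => leb_n _ _) => apply c_leb
  | |- R1 (fun x => S _) => apply c_S
  | |- R1 (fun x => pred _) => apply c_pred
  | |- R1 (fun x => _ + _) => apply c_add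
  | |- R1 (fun x => _ * _) => apply c_mul
  | |- R1 (fun x => _ - _) => apply c_sub
  | |- R1 _ => first [ assumption | exact R1_unp1 | exact R1_unp2 | exact R1_S | exact R1_pred | crec_ext ]
  end.
Ltac crec2 := repeat crec_step.

Lemma lhd_cons x l : lhd (code_list (x :: l)) = x.
Proof. unfold lhd; simpl; apply unp1_pair. Qed.
Lemma ltl_cons x l : ltl (code_list (x :: l)) = code_list l.
Proof. unfold ltl; simpl; apply unp2_pair. Qed.
Lemma ltl_nil : ltl (code_list []) = 0.
Proof. reflexivity. Qed.

Lemma itl_skipn i l : itl i (code_list l) = code_list (skipn i l).
Proof. revert l; induction i; intros l. reflexivity. unfold itl in *. rewrite Nat.iter_succ_r.
  destruct l as [|x l].
  - rewrite ltl_nil. pose proof (IHi []) as H; simpl in H; rewrite H, !skipn_nil. reflexivity.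
  - rewrite ltl_cons. apply IHi.
Qed.

Lemma itl_zero_iff i l : itl i (code_list l) = 0 <-> length l <= i.
Proof. rewrite itl_skipn. split.
  - intro H. destruct (skipn i l) eqn:E. apply (f_equal (@length _)) in E.
    rewrite length_skipn in E. simpl in E. lia. discriminate.
  - intro H. rewrite skipn_all2 by lia. reflexivity. Qed.

Lemma lnth_spec i l : lnth i (code_list l) = nth i l 0.
Proof. unfold lnth. rewrite itl_skipn. revert l; induction i; intros [|x l].
  reflexivity. apply lhd_cons. reflexivity. simpl. apply IHi. Qed.

Lemma code_ge_len l : length l <= code_list l.
Proof. induction l; simpl; auto. rewrite cpair_T. lia. Qed.

Lemma llen_spec l : llen (code_list l) = length l.
Proof. unfold llen. pose proof (code_ge_len l). apply bmin_eq. lia.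
  assert (itl (length l) (code_list l) = 0) by (apply itl_zero_iff; lia). lia.
  intros j Hj. assert (itl j (code_list l) <> 0). intro E; apply itl_zero_iff in E; lia. lia. Qed.

Definition cp (p : baire) k := code_list (prefix p k).

Lemma prefix_len p k : length (prefix p k) = k.
Proof. unfold prefix; rewrite length_map, length_seq; auto. Qed.

Lemma nth_prefix p k i : i < k -> nth i (prefix p k) 0 = p i.
Proof. intro H; unfold prefix. rewrite nth_indep with (d' := p 0) by (rewrite length_map, length_seq; auto).
  rewrite map_nth, seq_nth; auto. Qed.

Lemma lnth_cp p k i : i < k -> lnth i (cp p k) = p i.
Proof. intro; unfold cp; rewrite lnth_spec, nth_prefix; auto. Qed.
Lemma llen_cp p k : llen (cp p k) = k.
Proof. unfold cp; rewrite llen_spec, prefix_len; auto. Qed.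
Lemma itl_cp_zero p k i : itl i (cp p k) = 0 <-> k <= i.
Proof. unfold cp; rewrite itl_zero_iff, prefix_len; tauto. Qed.
Lemma cp_ge p k : k <= cp p k.
Proof. unfold cp; rewrite <- (prefix_len p k) at 1; apply code_ge_len. Qed.

Lemma firstc_cp p k j : j <= k -> firstc j (cp p k) = cp p j.
Proof. intro H; unfold firstc, cp; rewrite mkc_spec. unfold prefix at 2. f_equal.
  apply map_ext_in. intros i Hi. apply in_seq in Hi. fold (cp p k). rewrite lnth_cp; auto; lia. Qed.

Lemma mkc_prefix (F : nat -> nat) q L : (forall m, m < L -> F m = q m) -> mkc F L = cp q L.
Proof. intro H; rewrite mkc_spec; unfold cp, prefix; f_equal. apply map_ext_in.
  intros i Hi; apply in_seq in Hi; apply H; lia. Qed.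

Lemma ite_nz c a b : c <> 0 -> ite c a b = a.
Proof. destruct c; auto. intuition. Qed.
Lemma leb_n_t x y : x <= y -> leb_n x y = 1.
Proof. unfold leb_n; destruct (Nat.leb_spec x y); lia. Qed.
Lemma leb_n_f x y : y < x -> leb_n x y = 0.
Proof. unfold leb_n; destruct (Nat.leb_spec x y); lia. Qed.

Lemma phi_intro a p q (K : nat -> nat) :
  (forall n, a (cpair n (cp p (K n))) = S (q n)) ->
  (forall n j, j < K n -> a (cpair n (cp p j)) = 0) -> phi a p q.
Proof. intros H1 H2 n. exists (K n); split. apply H1. intros; apply H2; auto. Qed.

Definition idA z := ite (itl (unp1 z) (unp2 z)) (S (lnth (unp1 z) (unp2 z))) 0.
Lemma idA_comp : computable_nat idA.
Proof. change (R1 (fun z => idA z)); unfold idA. crec2. Qed.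
Lemma idA_phi p : phi idA p p.
Proof. apply (phi_intro _ _ _ S).
  - intro n. unfold idA. rewrite unp1_pair, unp2_pair. rewrite ite_nz. rewrite lnth_cp; auto.
    rewrite itl_cp_zero; lia.
  - intros n j Hj. unfold idA. rewrite unp1_pair, unp2_pair.
    assert (itl n (cp p j) = 0) as E by (apply itl_cp_zero; lia). rewrite E; reflexivity. Qed.

Lemma comp_baire_id (F : baire -> option baire) : (forall p q, F p = Some q -> q = p) -> comp_baire F.
Proof. intro H; exists idA; split. apply idA_comp. intros p q E; rewrite (H p q E); apply idA_phi. Qed.
Definition TP (a : nat -> nat) w j := a (cpair (unp1 w) (firstc j (unp2 w))).
Definition Tf a m c := bmin (TP a (cpair m c)) (S (llen c)).
Definition det a m c := leb_n (S (Tf a m c)) (S (llen c)).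
Definition qv a m c := pred (a (cpair m (firstc (Tf a m c) c))).
Definition ADP a c m := 1 - det a m c.
Definition alldet a L c := 1 - bcount (ADP a c) L.
Definition qvf a c m := qv a m c.
Definition qcode a L c := mkc (qvf a c) L.
Definition CP a b z L := alldet a L (unp2 z) * b (cpair (unp1 z) (qcode a L (unp2 z))).
Definition compA a b z :=
  ite (leb_n (bmin (CP a b z) (S (llen (unp2 z)))) (llen (unp2 z)))
      (b (cpair (unp1 z) (qcode a (bmin (CP a b z) (S (llen (unp2 z)))) (unp2 z)))) 0.

Section Comp.
Variable a : nat -> nat.
Hypothesis Ha : R1 a.

Lemma c_Tf f g : R1 f -> R1 g -> R1 (fun x => Tf a (f x) (g x)).
Proof. intros; unfold Tf. apply (c_bmin (TP a)); crec2. unfold P2, TP. apply c_app; crec2. Qed.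
Lemma c_det f g : R1 f -> R1 g -> R1 (fun x => det a (f x) (g x)).
Proof. intros; unfold det. crec2. apply c_Tf; auto. Qed.
Lemma c_qv f g : R1 f -> R1 g -> R1 (fun x => qv a (f x) (g x)).
Proof. intros; unfold qv. apply c_pred. apply c_app; auto. crec2. apply c_Tf; auto. Qed.
Lemma c_alldet f g : R1 f -> R1 g -> R1 (fun x => alldet a (f x) (g x)).
Proof. intros; unfold alldet. apply c_sub. crec2. apply (c_bcount (ADP a)); auto.
  unfold P2, ADP. apply c_sub. crec2. apply c_det; crec2. Qed.
Lemma c_qcode f g : R1 f -> R1 g -> R1 (fun x => qcode a (f x) (g x)).
Proof. intros; unfold qcode. apply (c_mkc (qvf a)); auto. unfold P2, qvf. apply c_qv; crec2. Qed.
End Comp.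

Lemma compA_comp a b : R1 a -> R1 b -> R1 (compA a b).
Proof. intros Ha Hb. unfold compA.
  assert (HL : R1 (fun z => bmin (CP a b z) (S (llen (unp2 z))))).
  { apply (c_bmin (CP a b) (fun z => S (llen (unp2 z))) (fun z => z)); crec2.
    unfold P2, CP. apply c_mul. apply c_alldet; crec2. apply c_app; auto. crec2. apply c_qcode; crec2. }
  apply c_ite. apply c_leb; crec2. apply c_app; auto. crec2. apply c_qcode; crec2. apply R1_const. Qed.

Lemma phi_choice a p q : phi a p q -> exists K : nat -> nat,
  (forall n, a (cpair n (cp p (K n))) = S (q n)) /\ (forall n j, j < K n -> a (cpair n (cp p j)) = 0).
Proof. intro H. exists (fun n => proj1_sig (constructive_indefinite_description _ (H n))).
  split; intro n; destruct (constructive_indefinite_description _ (H n)) as [k [H1 H2]]; simpl; auto. Qed.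

Lemma Tf_sem a p m K k : a (cpair m (cp p K)) <> 0 -> (forall j, j < K -> a (cpair m (cp p j)) = 0) ->
  Tf a m (cp p k) = (if K <=? k then K else S k).
Proof. intros H1 H2. unfold Tf. rewrite llen_cp.
  rewrite (bmin_ext _ (fun j => a (cpair m (cp p j)))).
  2:{ intros i Hi. unfold TP. rewrite unp1_pair, unp2_pair, firstc_cp; auto; lia. }
  destruct (Nat.leb_spec K k).
  - apply bmin_eq; auto; lia.
  - apply bmin_none. intros; apply H2; lia. Qed.

Lemma det_sem a p m K k : a (cpair m (cp p K)) <> 0 -> (forall j, j < K -> a (cpair m (cp p j)) = 0) ->
  det a m (cp p k) = (if K <=? k then 1 else 0).
Proof. intros H1 H2. unfold det. rewrite (Tf_sem a p m K k H1 H2), llen_cp.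
  destruct (Nat.leb_spec K k). apply leb_n_t; lia. apply leb_n_f; lia. Qed.

Lemma qv_sem a p m K k v : a (cpair m (cp p K)) = S v -> (forall j, j < K -> a (cpair m (cp p j)) = 0) ->
  K <= k -> qv a m (cp p k) = v.
Proof. intros H1 H2 Hk. unfold qv. rewrite (Tf_sem a p m K k) by (auto; congruence).
  destruct (Nat.leb_spec K k); try lia. rewrite firstc_cp by auto. rewrite H1; auto. Qed.

Fixpoint maxk (K : nat -> nat) (L : nat) : nat := match L with 0 => 0 | S L' => max (maxk K L') (K L') end.
Lemma maxk_spec K L k : maxk K L <= k <-> (forall m, m < L -> K m <= k).
Proof. induction L; simpl. split; intros; lia. rewrite Nat.max_lub_iff, IHL. split.
  intros [H1 H2] m Hm. destruct (Nat.eq_dec m L); subst; auto. apply H1; lia.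
  intros H; split; auto. Qed.

Lemma bcount_zero P n : bcount P n = 0 <-> (forall i, i < n -> P i = 0).
Proof. induction n; simpl. split; intros; auto; lia. split.
  - intros H i Hi. assert (bcount P n = 0) by lia. destruct (Nat.eq_dec i n).
    subst. destruct (P n); auto. rewrite ite_S in H; lia. apply IHn; auto; lia.
  - intros H. rewrite (proj2 IHn) by (intros; apply H; lia). rewrite H by lia. reflexivity. Qed.

Lemma alldet_sem a p q K L k : (forall n, a (cpair n (cp p (K n))) = S (q n)) ->
  (forall n j, j < K n -> a (cpair n (cp p j)) = 0) ->
  alldet a L (cp p k) = (if maxk K L <=? k then 1 else 0).
Proof. intros H1 H2. unfold alldet. destruct (Nat.leb_spec (maxk K L) k) as [Hm|Hm].
  - assert (bcount (ADP a (cp p k)) L = 0) as E. apply bcount_zero. intros i Hi. unfold ADP.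
    rewrite (det_sem a p i (K i) k) by (rewrite ?H1; auto; lia).
    apply maxk_spec with (m := i) in Hm; auto. destruct (Nat.leb_spec (K i) k); lia.
    rewrite E; auto.
  - assert (bcount (ADP a (cp p k)) L <> 0) as E. rewrite bcount_zero. intro H.
    assert (maxk K L <= k); try lia. apply maxk_spec. intros m Hm'. specialize (H m Hm'). unfold ADP in H.
    rewrite (det_sem a p m (K m) k) in H by (rewrite ?H1; auto; lia).
    destruct (Nat.leb_spec (K m) k); lia. lia. Qed.

Lemma qcode_sem a p q K L k : (forall n, a (cpair n (cp p (K n))) = S (q n)) ->
  (forall n j, j < K n -> a (cpair n (cp p j)) = 0) -> maxk K L <= k ->
  qcode a L (cp p k) = cp q L.
Proof. intros H1 H2 Hm. unfold qcode. apply mkc_prefix. intros m Hl. unfold qvf.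
  apply (qv_sem a p m (K m)); auto. apply maxk_spec with (m := m) in Hm; auto. Qed.

Lemma compA_phi a b p q r : phi a p q -> phi b q r -> phi (compA a b) p r.
Proof. intros Hpa Hpb. destruct (phi_choice _ _ _ Hpa) as [K [K1 K2]].
  destruct (phi_choice _ _ _ Hpb) as [Kb [B1 B2]].
  assert (CPsem : forall n k L, L <= k -> CP a b (cpair n (cp p k)) L =
      if maxk K L <=? k then b (cpair n (cp q L)) else 0).
  { intros n k L HL. unfold CP. rewrite unp1_pair, unp2_pair. rewrite (alldet_sem a p q K L k K1 K2).
    destruct (Nat.leb_spec (maxk K L) k). rewrite (qcode_sem a p q K L k K1 K2) by auto. lia. lia. }
  apply (phi_intro _ _ _ (fun n => max (Kb n) (maxk K (Kb n)))).
  - intro n. unfold compA. rewrite unp1_pair, unp2_pair, llen_cp.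
    set (k := max (Kb n) (maxk K (Kb n))).
    assert (bmin (CP a b (cpair n (cp p k))) (S k) = Kb n) as E.
    { apply bmin_eq. lia. rewrite CPsem by lia. destruct (Nat.leb_spec (maxk K (Kb n)) k); try lia.
      rewrite B1; auto.
      intros j Hj. rewrite CPsem by lia. destruct (Nat.leb_spec (maxk K j) k); auto. }
    rewrite E. rewrite leb_n_t by lia. rewrite ite_S. rewrite (qcode_sem a p q K) by (auto; lia). auto.
  - intros n j Hj. unfold compA. rewrite unp2_pair, llen_cp.
    assert (bmin (CP a b (cpair n (cp p j))) (S j) = S j) as E.
    { apply bmin_none. intros L HL. rewrite CPsem by lia. destruct (Nat.leb_spec (maxk K L) j); auto.
      destruct (Nat.lt_ge_cases L (Kb n)). apply B2; auto.
      exfalso. assert (maxk K (Kb n) <= j). apply maxk_spec. intros m Hm.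
      apply maxk_spec with (m := m) in H; auto; lia. lia. }
    rewrite E. rewrite leb_n_f by lia. reflexivity. Qed.

Lemma comp_baire_comp (F G : baire -> option baire) : comp_baire F -> comp_baire G ->
  comp_baire (fun p => match F p with Some q => G q | None => None end).
Proof. intros [a [Ha HF]] [b [Hb HG]]. exists (compA a b). split. apply compA_comp; auto.
  intros p r E. destruct (F p) as [q|] eqn:Fp; try discriminate.
  apply (compA_phi a b p q r); auto. Qed.
Definition cnzl j c := bcount (fun i => lnth i c) j.
Definition mP z j := sg (itl j (unp2 z)) * sg (lnth j (unp2 z)) * eqn (cnzl j (unp2 z)) (unp1 z).
Definition mA z := ite (leb_n (S (bmin (mP z) (unp2 z))) (unp2 z)) (lnth (bmin (mP z) (unp2 z)) (unp2 z)) 0.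

Lemma c_cnzl f g : R1 f -> R1 g -> R1 (fun x => cnzl (f x) (g x)).
Proof. intros; unfold cnzl. apply (c_bcount (fun c i => lnth i c)); auto. unfold P2; crec2. Qed.

Ltac crec_ext ::= first [ apply c_cnzl | apply c_Tf | apply c_det | apply c_qv | apply c_alldet | apply c_qcode ].

Lemma mA_comp : computable_nat mA.
Proof. change (R1 (fun z => mA z)); unfold mA.
  assert (R1 (fun z => bmin (mP z) (unp2 z))).
  { apply (c_bmin mP unp2 (fun z => z)); crec2. unfold P2, mP. crec2. }
  crec2. Qed.

Lemma sg_0 : sg 0 = 0. Proof. reflexivity. Qed.
Lemma sg_nz x : x <> 0 -> sg x = 1. Proof. destruct x; intuition. Qed.
Lemma eqn_t x : eqn x x = 1. Proof. unfold eqn; rewrite leb_n_t; auto. Qed.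
Lemma eqn_f x y : x <> y -> eqn x y = 0.
Proof. intro; unfold eqn. destruct (Nat.lt_ge_cases x y). rewrite (leb_n_f y x); lia.
  rewrite (leb_n_f x y); lia. Qed.

Lemma cnzl_cp p k j : j <= k -> cnzl j (cp p k) = cnz p j.
Proof. induction j; intro H; simpl; auto. unfold cnzl in *; simpl. rewrite IHj by lia.
  rewrite lnth_cp by lia. destruct (p j); auto. Qed.

Lemma cnz_mono p i j : i <= j -> cnz p i <= cnz p j.
Proof. induction 1; simpl; lia. Qed.
Lemma cnz_strict p i j : p i <> 0 -> i < j -> cnz p i < cnz p j.
Proof. intros H Hij. assert (cnz p (S i) <= cnz p j) by (apply cnz_mono; lia).
  simpl in H0. destruct (Nat.eqb_spec (p i) 0); lia. Qed.

Lemma nat_choice (P : nat -> nat -> Prop) : (forall n, exists m, P n m) -> exists f, forall n, P n (f n).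
Proof. intro H. exists (fun n => proj1_sig (constructive_indefinite_description _ (H n))).
  intro n; destruct (constructive_indefinite_description _ (H n)); auto. Qed.

Lemma mA_phi p q : minus1 p q -> phi mA p q.
Proof. intro Hm. destruct (nat_choice _ Hm) as [J HJ].
  assert (Hu : forall n j, p j <> 0 -> cnz p j = n -> j = J n).
  { intros n j H1 H2. destruct (HJ n) as [E1 E2].
    destruct (lt_eq_lt_dec j (J n)) as [[Hl|He]|Hl]; auto.
    - pose proof (cnz_strict p j (J n) H1 Hl); lia.
    - assert (p (J n) <> 0) by congruence. pose proof (cnz_strict p (J n) j H Hl); lia. }
  assert (HmP : forall n k j, mP (cpair n (cp p k)) j = if andb (j <? k) (j =? J n) then 1 else 0).
  { intros n k j. unfold mP. rewrite unp1_pair, unp2_pair.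
    destruct (Nat.ltb_spec j k).
    - rewrite (sg_nz (itl j _)) by (rewrite itl_cp_zero; lia). rewrite lnth_cp, cnzl_cp by lia.
      destruct (Nat.eq_dec j (J n)).
      + subst. rewrite Nat.eqb_refl. destruct (HJ n) as [E1 E2]. rewrite E1, E2, (sg_nz (S (q n))) by lia. rewrite eqn_t. reflexivity.
      + rewrite (proj2 (Nat.eqb_neq _ _) n0). simpl.
        destruct (Nat.eq_dec (p j) 0) as [E|E]. rewrite E, sg_0. lia.
        rewrite eqn_f by (intro; apply n0; apply (Hu n j); auto). lia.
    - assert (itl j (cp p k) = 0) as E by (apply itl_cp_zero; lia). rewrite E, sg_0. reflexivity. }
  apply (phi_intro _ _ _ (fun n => S (J n))).
  - intro n. unfold mA. rewrite unp2_pair. pose proof (cp_ge p (S (J n))).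
    assert (bmin (mP (cpair n (cp p (S (J n))))) (cp p (S (J n))) = J n) as E.
    { apply bmin_eq. lia. rewrite HmP. rewrite (proj2 (Nat.ltb_lt _ _)), Nat.eqb_refl by lia. simpl; lia.
      intros j Hj. rewrite HmP. destruct (Nat.eq_dec j (J n)). lia. rewrite (proj2 (Nat.eqb_neq _ _) n0). destruct (j <? S (J n)); auto. }
    rewrite E, leb_n_t, ite_S by lia. rewrite lnth_cp by lia. apply (HJ n).
  - intros n j Hj. unfold mA. rewrite unp2_pair.
    assert (bmin (mP (cpair n (cp p j))) (cp p j) = cp p j) as E.
    { apply bmin_none. intros i Hi. rewrite HmP. destruct (Nat.ltb_spec i j); simpl; auto.
      destruct (Nat.eqb_spec i (J n)); auto; lia. }
    rewrite E, leb_n_f by lia. reflexivity. Qed.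
Definition adAt a J t c := alldet a J (firstc t c).
Definition EP a w j := adAt a (S j) (unp1 w - j) (unp2 w) * ite (unp1 w - j) (1 - adAt a (S j) (unp1 w - j - 1) (unp2 w)) 1.
Definition Ecalc a m c := ite (leb_n (bmin (EP a (cpair m c)) (S m)) m) (S (qv a (bmin (EP a (cpair m c)) (S m)) c)) 0.
Definition eA a z := ite (leb_n (S (unp1 z)) (llen (unp2 z))) (S (Ecalc a (unp1 z) (unp2 z))) 0.
Definition Emap a (p : baire) m := Ecalc a m (cp p (S m)).

Lemma c_adAt a J f g : R1 a -> R1 J -> R1 f -> R1 g -> R1 (fun x => adAt a (J x) (f x) (g x)).
Proof. intros; unfold adAt. crec2. Qed.

Lemma eA_comp a : R1 a -> computable_nat (eA a).
Proof. intro Ha. change (R1 (fun z => eA a z)); unfold eA, Ecalc.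
  assert (R1 (fun z => bmin (EP a (cpair (unp1 z) (unp2 z))) (S (unp1 z)))).
  { apply (c_bmin (EP a) (fun z => S (unp1 z)) (fun z => cpair (unp1 z) (unp2 z))); crec2.
    unfold P2, EP. apply c_mul. apply c_adAt; crec2. apply c_ite; crec2; apply c_adAt; crec2. }
  crec2. Qed.

Lemma eA_phi a p : phi (eA a) p (Emap a p).
Proof. apply (phi_intro _ _ _ S).
  - intro m. unfold eA. rewrite unp1_pair, unp2_pair, llen_cp, leb_n_t, ite_S by lia. reflexivity.
  - intros m j Hj. unfold eA. rewrite unp1_pair, unp2_pair, llen_cp, leb_n_f by lia. reflexivity. Qed.

Lemma comp_baire_E a : R1 a -> comp_baire (fun p => Some (Emap a p)).
Proof. intro Ha. exists (eA a). split. apply eA_comp; auto. intros p q E; inversion E; apply eA_phi. Qed.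

Section ESem.
Variables (a : nat -> nat) (p q : baire) (K : nat -> nat).
Hypothesis K1 : forall n, a (cpair n (cp p (K n))) = S (q n).
Hypothesis K2 : forall n j, j < K n -> a (cpair n (cp p j)) = 0.

Definition ee j := maxk K (S j) + j.

Lemma ee_lt j j' : j < j' -> ee j < ee j'.
Proof. unfold ee. intro H. assert (maxk K (S j) <= maxk K (S j')).
  { induction H; simpl in *; lia. } lia. Qed.

Lemma adAt_sem J t k : t <= k -> adAt a J t (cp p k) = (if maxk K J <=? t then 1 else 0).
Proof. intro H. unfold adAt. rewrite firstc_cp by auto. apply (alldet_sem a p q); auto. Qed.

Lemma EP_sem m j : j <= m -> EP a (cpair m (cp p (S m))) j = (if ee j =? m then 1 else 0).
Proof. intro H. unfold EP. rewrite unp1_pair, unp2_pair. unfold ee.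
  rewrite adAt_sem by lia. destruct (Nat.leb_spec (maxk K (S j)) (m - j)).
  - destruct (m - j) eqn:E.
    + rewrite ite_0. replace (maxk K (S j) + j =? m) with true; auto. symmetry; apply Nat.eqb_eq; lia.
    + rewrite ite_S. rewrite adAt_sem by lia.
      destruct (Nat.leb_spec (maxk K (S j)) (S n - 1)).
      * replace (maxk K (S j) + j =? m) with false; auto. symmetry; apply Nat.eqb_neq; lia.
      * replace (maxk K (S j) + j =? m) with true; auto. symmetry; apply Nat.eqb_eq; lia.
  - replace (maxk K (S j) + j =? m) with false. lia. symmetry; apply Nat.eqb_neq; lia. Qed.

Lemma Emap_hit j : Emap a p (ee j) = S (q j).
Proof. unfold Emap, Ecalc. set (m := ee j).
  assert (Hj : j <= m) by (unfold m, ee; lia).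
  assert (bmin (EP a (cpair m (cp p (S m)))) (S m) = j) as E.
  { apply bmin_eq. lia. rewrite EP_sem, Nat.eqb_refl by auto. lia.
    intros i Hi. rewrite EP_sem by lia. pose proof (ee_lt i j Hi).
    replace (ee i =? m) with false; auto. symmetry; apply Nat.eqb_neq. unfold m; lia. }
  rewrite E, leb_n_t, ite_S by auto. f_equal. apply (qv_sem a p j (K j)); auto.
  assert (K j <= maxk K (S j)) by (simpl; lia). unfold m, ee. lia. Qed.

Lemma Emap_miss m : (forall j, ee j <> m) -> Emap a p m = 0.
Proof. intro H. unfold Emap, Ecalc.
  assert (bmin (EP a (cpair m (cp p (S m)))) (S m) = S m) as E.
  { apply bmin_none. intros j Hj. rewrite EP_sem by lia.
    specialize (H j). destruct (Nat.eqb_spec (ee j) m); tauto. }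
  rewrite E, leb_n_f by lia. reflexivity. Qed.

Lemma cnz_gap (f : baire) x y : x <= y -> (forall i, x <= i < y -> f i = 0) -> cnz f y = cnz f x.
Proof. induction 1 as [|y Hxy IH]; intros H; auto. simpl. rewrite IH by (intros; apply H; lia).
  rewrite (H y) by lia. simpl. lia. Qed.

Lemma Emap_minus1 : minus1 (Emap a p) q.
Proof. intro k. exists (ee k). split. apply Emap_hit.
  assert (Hz : forall i, (forall j, ee j <> i) -> Emap a p i = 0) by apply Emap_miss.
  induction k.
  - rewrite (cnz_gap _ 0 (ee 0)). reflexivity. lia.
    intros i Hi; apply Hz; intros j Ej. destruct j. lia. pose proof (ee_lt 0 (S j)); lia.
  - rewrite (cnz_gap _ (S (ee k)) (ee (S k))).
    + simpl. rewrite IHk, Emap_hit. simpl. lia.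
    + pose proof (ee_lt k (S k)); lia.
    + intros i Hi. apply Hz. intros j Ej. destruct (Nat.lt_ge_cases j (S k)).
      * destruct (Nat.eq_dec j k). subst; lia. pose proof (ee_lt j k); lia.
      * destruct (Nat.eq_dec j (S k)). subst; lia. pose proof (ee_lt (S k) j); lia. Qed.
End ESem.
Lemma total_realizer (X : rep_space) (g : baire -> X) :
  computable_mv id_rep (delta X) (graph_t g) ->
  exists H, comp_baire H /\ forall p, exists q, H p = Some q /\ delta X q = Some (g p).
Proof. intros [H [HH HR]]. exists H; split; auto. intro p.
  destruct (HR p p eq_refl (ex_intro _ (g p) eq_refl)) as [q [b [E1 [E2 E3]]]].
  exists q; split; auto. unfold graph_t in E3; subst; auto. Qed.

Lemma comp_baire_total (H : baire -> option baire) (G : baire -> baire) :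
  comp_baire H -> (forall p, H p = Some (G p)) -> comp_baire (fun p => Some (G p)).
Proof. intros [a [Ha HH]] E. exists a; split; auto. intros p q Eq. inversion Eq; subst.
  apply HH. auto. Qed.

Lemma minus1_unique p q1 q2 : minus1 p q1 -> minus1 p q2 -> q1 = q2.
Proof. intros H1 H2. apply functional_extensionality. intro k.
  destruct (H1 k) as [n1 [A1 B1]], (H2 k) as [n2 [A2 B2]].
  destruct (lt_eq_lt_dec n1 n2) as [[Hl|He]|Hl].
  - pose proof (cnz_strict p n1 n2 ltac:(congruence) Hl); lia.
  - subst. congruence.
  - pose proof (cnz_strict p n2 n1 ltac:(congruence) Hl); lia. Qed.

Lemma compl_minus1 (X : rep_space) p q x : minus1 p q -> delta X q = Some x -> compl_delta X p = Some (Some x).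
Proof. intros Hm Hd. unfold compl_delta. destruct excluded_middle_informative as [H|H].
  - destruct (constructive_indefinite_description _ H) as [x' [q' [Hm' Hd']]]. simpl.
    rewrite (minus1_unique p q q' Hm Hm') in Hd. congruence.
  - exfalso; apply H; eauto. Qed.

Lemma compl_some (X : rep_space) p : exists o, compl_delta X p = Some o.
Proof. unfold compl_delta. destruct excluded_middle_informative; eauto. Qed.

Lemma compl_surj (X : rep_space) (o : option X) : exists p, compl_delta X p = Some o.
Proof. destruct o as [x|].
  - destruct (delta_surj X x) as [q Hq]. exists (fun n => S (q n)).
    apply (compl_minus1 X _ q); auto. intro k; exists k; split; auto.
    induction k; simpl; auto. rewrite IHk; simpl. lia.
  - exists (fun _ => 0). unfold compl_delta. destruct excluded_middle_informative as [H|H]; auto.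
    exfalso. destruct H as [x [q [Hm _]]]. destruct (Hm 0) as [n [E _]]. discriminate. Qed.

Definition Ybar (X : rep_space) : rep_space := RepSpace (compl_delta X) (compl_surj X).
Definition Ybaire : rep_space := RepSpace id_rep (fun x => ex_intro _ x eq_refl).

Section Main.
Variable X : rep_space.

Definition D1 := exists d : baire -> X,
        (forall x : X, exists p, d p = x) /\
        precomplete d /\ rep_equiv (fun p => Some (d p)) (delta X).
Definition D2 := forall f : baire -> option X, computable_mv id_rep (delta X) (graph_p f) ->
       exists g : baire -> X,
         computable_mv id_rep (delta X) (graph_t g) /\
         forall p x, f p = Some x -> g p = x.
Definition D3 := forall (Y : rep_space) (f : Y -> X -> Prop),
       computable_mv (delta Y) (delta X) f ->
       exists g : Y -> X -> Prop,
         mv_total g /\ computable_mv (delta Y) (delta X) g /\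
         forall y, mv_dom f y -> forall x, g y x -> f y x.
Definition D4 := exists r : option X -> X -> Prop,
       mv_retraction r /\ computable_mv (compl_delta X) (delta X) r.

Lemma d2_d3 : D2 -> D3.
Proof. intros H2 Y f [F [HF HR]].
  destruct (H2 (fun p => match F p with Some q => delta X q | None => None end)) as [g' [Hg' Ext]].
  { exists F; split; auto. intros p b Ep [b' Eb']. unfold graph_p in Eb'. unfold id_rep in Ep; injection Ep as Ep; subst b.
    destruct (F p) as [q|] eqn:E; try discriminate. exists q, b'; split; auto. split; auto.
    unfold graph_p; rewrite E; auto. }
  destruct (total_realizer X g' Hg') as [H [HH HHr]].
  exists (fun y x => exists p, delta Y p = Some y /\ x = g' p). split; [|split].
  - intro y. destruct (delta_surj Y y) as [p Hp]. exists (g' p), p; auto.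
  - exists H; split; auto. intros p y Hp _. destruct (HHr p) as [q [E1 E2]]. exists q, (g' p); eauto.
  - intros y Hy x [p [Hp Hx]]. subst x. destruct (HR p y Hp Hy) as [q [b [E1 [E2 E3]]]].
    rewrite (Ext p b); auto. rewrite E1; auto. Qed.

Lemma d3_d2 : D3 -> D2.
Proof. intros H3 f Hf. destruct (H3 Ybaire (graph_p f) Hf) as [g [Htot [[H [HH HR]] Hsub]]].
  assert (Hex : forall p, exists b, exists q, H p = Some q /\ delta X q = Some b /\ g p b).
  { intro p. destruct (HR p p eq_refl (Htot p)) as [q [b [E1 [E2 E3]]]]. eauto. }
  exists (fun p => proj1_sig (constructive_indefinite_description _ (Hex p))). split.
  - exists H; split; auto. intros p p' Ep _. simpl in Ep; unfold id_rep in Ep; injection Ep as Ep; subst p.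
    unfold graph_t. destruct (constructive_indefinite_description _ (Hex p')) as [b [q [E1 [E2 E3]]]]. simpl.
    exists q, b; split; auto.
  - intros p x Ep. destruct (constructive_indefinite_description _ (Hex p)) as [b [q [E1 [E2 E3]]]]. simpl.
    assert (graph_p f p b) as Hb. apply Hsub; auto. exists x; auto. unfold graph_p in Hb; congruence. Qed.

Lemma d3_d4 : D3 -> D4.
Proof. intros H3.
  set (M := fun p => match excluded_middle_informative (exists q, minus1 p q) with
                     | left H => Some (proj1_sig (constructive_indefinite_description _ H)) | right _ => None end).
  assert (HM : comp_baire M).
  { exists mA; split. apply mA_comp. intros p q E. unfold M in E.
    destruct excluded_middle_informative as [H|H]; try discriminate. inversion E; subst.
    destruct (constructive_indefinite_description _ H); simpl. apply mA_phi; auto. }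
  destruct (H3 (Ybar X) (fun o x => o = Some x)) as [g [Htot [Hc Hsub]]].
  { exists M; split; auto. intros p o Ep [x Ex]. subst o. simpl in Ep.
    unfold compl_delta in Ep. destruct excluded_middle_informative as [H|H]; try discriminate.
    destruct (constructive_indefinite_description _ H) as [x' [q [Hm Hd]]]. simpl in Ep. inversion Ep; subst.
    unfold M. destruct excluded_middle_informative as [H'|H']. 2:{ exfalso; eauto. }
    destruct (constructive_indefinite_description _ H') as [q' Hq']. simpl.
    rewrite (minus1_unique p q' q) by auto. exists q, x; auto. }
  exists g. split; auto. split; auto. intros x y. split.
  - intro Hg. assert (Some x = Some y) by (apply Hsub; [exists x; auto|auto]). congruence.
  - intro; subst. destruct (Htot (Some x)) as [y Hy]. assert (Some x = Some y) by (apply Hsub; [exists x; auto|auto]).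
    congruence. Qed.

Lemma d4_d3 : D4 -> D3.
Proof. intros [r [[Rtot Rret] [R [HRc HR]]]] Y f [F [[a [Ha HFa]] HFr]].
  assert (RS : forall p', exists q b, R p' = Some q /\ delta X q = Some b /\
      forall o, compl_delta X p' = Some o -> r o b).
  { intro p'. destruct (compl_some X p') as [o Ho]. destruct (HR p' o Ho (Rtot o)) as [q [b [E1 [E2 E3]]]].
    exists q, b; split; auto; split; auto. intros o' Ho'. congruence. }
  exists (fun y x => exists p, delta Y p = Some y /\ exists q, R (Emap a p) = Some q /\ delta X q = Some x).
  split; [|split].
  - intro y. destruct (delta_surj Y y) as [p Hp]. destruct (RS (Emap a p)) as [q [b [E1 [E2 _]]]].
    exists b, p; split; eauto.
  - exists (fun p => match Some (Emap a p) with Some q => R q | None => None end). split.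
    apply (comp_baire_comp (fun p => Some (Emap a p)) R); auto. apply comp_baire_E; auto.
    intros p y Hp _. destruct (RS (Emap a p)) as [q [b [E1 [E2 _]]]]. exists q, b; split; auto; split; eauto.
  - intros y Hy x [p [Hp [q [E1 E2]]]]. destruct (HFr p y Hp Hy) as [q0 [b0 [F1 [F2 F3]]]].
    destruct (phi_choice _ _ _ (HFa p q0 F1)) as [K [K1 K2]].
    pose proof (Emap_minus1 a p q0 K K1 K2) as Hm.
    pose proof (compl_minus1 X _ _ _ Hm F2) as Hc.
    destruct (RS (Emap a p)) as [q1 [b1 [G1 [G2 G3]]]].
    specialize (G3 _ Hc). apply Rret in G3. subst b1. congruence. Qed.

Lemma d2_d1 : D2 -> D1.
Proof. intros H2.
  set (F0 := fun p => match delta X p with Some _ => Some p | None => None end).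
  assert (HF0 : comp_baire F0).
  { apply comp_baire_id. intros p q E; unfold F0 in E; destruct (delta X p); inversion E; auto. }
  destruct (H2 (delta X)) as [g [Hg Ext]].
  { exists F0; split; auto. intros p b Ep [x Ex]. unfold id_rep in Ep; injection Ep as Ep; subst b.
    unfold graph_p in Ex. exists p, x. unfold F0; rewrite Ex. auto. }
  destruct (total_realizer X g Hg) as [H [HH HHr]].
  exists g. split; [|split].
  - intro x. destruct (delta_surj X x) as [p Hp]. exists p; auto.
  - intros F HF.
    destruct (H2 (fun p => match F p with Some q => Some (g q) | None => None end)) as [h [Hh Exth]].
    { exists (fun p => match F p with Some q => H q | None => None end). split.
      apply comp_baire_comp; auto. intros p b Ep [x Ex]. unfold id_rep in Ep; injection Ep as Ep; subst b.
      unfold graph_p in Ex. destruct (F p) as [q|] eqn:E; [|discriminate]. injection Ex as Ex; subst x.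
      destruct (HHr q) as [q' [E1 E2]]. exists q', (g q). split; auto. split; auto.
      unfold graph_p; rewrite E; auto. }
    destruct (total_realizer X h Hh) as [H' [HH' HHr']].
    set (G := fun p => match H' p with Some q => q | None => p end).
    assert (HG : forall p, H' p = Some (G p) /\ delta X (G p) = Some (h p)).
    { intro p; unfold G. destruct (HHr' p) as [q [E1 E2]]. rewrite E1; auto. }
    exists G. split. apply (comp_baire_total H'); auto. intro p; apply HG.
    intros p q E. destruct (HG p) as [_ E2]. rewrite (Ext _ _ E2). symmetry. apply Exth. rewrite E; auto.
  - split.
    + exists H; split; auto. intro p. destruct (HHr p) as [q [E1 E2]]. rewrite E1; auto.
    + exists F0; split; auto. intro p. unfold F0. destruct (delta X p) eqn:E; auto. rewrite (Ext _ _ E); auto. Qed.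

Lemma d1_d2 : D1 -> D2.
Proof. intros [d [Hsurj [Hpre [[K [HK EK]] [H [HH EH]]]]]] f [F [HF HR]].
  destruct (Hpre (fun p => match F p with Some q => H q | None => None end)) as [G [HG EG]].
  { apply comp_baire_comp; auto. }
  exists (fun p => d (G p)). split.
  - exists (fun p => match Some (G p) with Some q => K q | None => None end). split.
    apply (comp_baire_comp (fun p => Some (G p)) K); auto. intros p p' Ep _. unfold id_rep in Ep; injection Ep as Ep; subst p.
    specialize (EK (G p')). destruct (K (G p')) as [q|] eqn:E; try discriminate.
    exists q, (d (G p')). split; auto. split; auto. reflexivity.
  - intros p x Ep. destruct (HR p p eq_refl (ex_intro _ x Ep)) as [q' [b [E1 [E2 E3]]]].
    unfold graph_p in E3. rewrite E3 in Ep; inversion Ep; subst.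
    specialize (EH q'). rewrite E2 in EH. destruct (H q') as [q''|] eqn:E; try discriminate.
    inversion EH. rewrite <- (EG p q''). auto. rewrite E1; auto. Qed.
End Main.

Theorem proposition2p6 (X : rep_space) :
  ( (* (1) *)
    (exists d : baire -> X,
        (forall x : X, exists p, d p = x) /\
        precomplete d /\ rep_equiv (fun p => Some (d p)) (delta X))
  <->
    (* (2) *)
    (forall f : baire -> option X, computable_mv id_rep (delta X) (graph_p f) ->
       exists g : baire -> X,
         computable_mv id_rep (delta X) (graph_t g) /\
         forall p x, f p = Some x -> g p = x) )
  /\
  ( (* (2) *)
    (forall f : baire -> option X, computable_mv id_rep (delta X) (graph_p f) ->
       exists g : baire -> X,
         computable_mv id_rep (delta X) (graph_t g) /\
         forall p x, f p = Some x -> g p = x)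
  <->
    (* (3) *)
    (forall (Y : rep_space) (f : Y -> X -> Prop),
       computable_mv (delta Y) (delta X) f ->
       exists g : Y -> X -> Prop,
         mv_total g /\ computable_mv (delta Y) (delta X) g /\
         forall y, mv_dom f y -> forall x, g y x -> f y x) )
  /\
  ( (* (3) *)
    (forall (Y : rep_space) (f : Y -> X -> Prop),
       computable_mv (delta Y) (delta X) f ->
       exists g : Y -> X -> Prop,
         mv_total g /\ computable_mv (delta Y) (delta X) g /\
         forall y, mv_dom f y -> forall x, g y x -> f y x)
  <->
    (* (4) *)
    (exists r : option X -> X -> Prop,
       mv_retraction r /\ computable_mv (compl_delta X) (delta X) r) ).
Proof.
  split; [split|split; split].
  - exact (d1_d2 X).
  - exact (d2_d1 X).
  - exact (d2_d3 X).
  - exact (d3_d2 X).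
  - exact (d3_d4 X).
  - exact (d4_d3 X).
Qed.
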